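(* Fix integers $s_l,s_h\ge1$ and let $N=s_ls_h$. For parameters $p_h\ge p_l\ge0$, let the three-layer hierarchical random graph $\mathcal{G}$ have co-occurrence (adjacency) matrix $P\in\mathbb{R}^{N\times N}$ obtained by partitioning the $N$ vertices into $s_l$ groups of $s_h$ consecutive vertices and setting $P_{ij}=p_h$ if $i,j$ lie in the same group and $P_{ij}=p_l$ otherwise, with the entries normalized to sum to one. Let $\mathcal{G}'$ be another such graph with the same $s_l,s_h$ and parameters $p_h'\ge p_l'\ge0$ (entries also summing to one). If $p_h-p_l\le p_h'-p_l'$, then for every $t$, $\sigma_t\le\sigma_t'$, where $\sigma_t,\sigma_t'$ denote the $t$-th largest singular values of the co-occurrence matrices of $\mathcal{G}$ and $\mathcal{G}'$, respectively.
   Context: In a hierarchical random graph, the leaves of a hierarchical tree are the graph's vertices and the probability of an edge between two vertices is the probability attached to their lowest common ancestor; here the tree has two hidden layers, with $p_l$ the (high-level) connection probability across groups and $p_h$ the (lower-level) connection probability within a group. *)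

(* Defs.v *)
From HB Require Import structures.
From mathcomp Require Import all_boot all_order all_algebra.
Set Implicit Arguments. Unset Strict Implicit. Unset Printing Implicit Defensive.
Import Order.TTheory GRing.Theory Num.Theory.
Local Open Scope ring_scope.

Definition hrg_matrix (R : ringType) (sl sh : nat) (pl ph : R)
  : 'M[R]_(sl * sh) :=
  \matrix_(i, j) (if (i %/ sh == j %/ sh)%N then ph else pl).

Definition singular_values (R : rcfType) (n : nat) (A : 'M[R]_n) (s : seq R)
  : Prop :=
  [/\ size s = n,
      all (fun x => 0 <= x) s,
      sorted (fun x y => y <= x) s &
      char_poly (A^T *m A) = \prod_(x <- s) ('X - (x ^+ 2)%:P)].

(* Main.v *)
Require Import Defs.
From HB Require Import structures.
From mathcomp Require Import all_boot all_order all_algebra.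
From mathcomp Require Import ring lra zify.
Set Implicit Arguments. Unset Strict Implicit. Unset Printing Implicit Defensive.
Import Order.TTheory GRing.Theory Num.Theory.
Local Open Scope ring_scope.

Lemma grp_lt (sl sh : nat) (Hsh : (0 < sh)%N) (i : 'I_(sl*sh)) : (i %/ sh < sl)%N.
Proof. by rewrite ltn_divLR. Qed.

Definition grp (sl sh : nat) (Hsh : (0 < sh)%N) (i : 'I_(sl*sh)) : 'I_sl :=
  Ordinal (grp_lt Hsh i).

Definition Emx (R : nzRingType) sl sh (Hsh : (0 < sh)%N) : 'M[R]_(sl*sh, sl) :=
  \matrix_(i, g) ((grp Hsh i == g)%:R).

Definition C0 (R : nzRingType) sl (pl ph : R) : 'M[R]_sl :=
  \matrix_(g, h) (if g == h then ph else pl).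

Lemma sum_pick (R : nzRingType) n (k : 'I_n) (F : 'I_n -> R) :
  \sum_(g < n) (k == g)%:R * F g = F k.
Proof.
rewrite (bigD1 k) //= eqxx mul1r big1 ?addr0 // => g gk.
by rewrite eq_sym (negbTE gk) mul0r.
Qed.

Lemma sum_pickr (R : nzRingType) n (k : 'I_n) (F : 'I_n -> R) :
  \sum_(g < n) F g * (k == g)%:R = F k.
Proof.
rewrite (bigD1 k) //= eqxx mulr1 big1 ?addr0 // => g gk.
by rewrite eq_sym (negbTE gk) mulr0.
Qed.

Lemma hrg_fact (R : nzRingType) sl sh (Hsh : (0 < sh)%N) (pl ph : R) :
  hrg_matrix sl sh pl ph = Emx R sl Hsh *m C0 sl pl ph *m (Emx R sl Hsh)^T.
Proof.
apply/matrixP => i j; rewrite !mxE.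
under eq_bigr => h _ do rewrite !mxE.
under eq_bigr => h _ do under eq_bigr => g _ do rewrite !mxE.
under eq_bigr => h _ do rewrite sum_pick.
by rewrite sum_pickr.
Qed.

Lemma count_grp sl sh (Hsh : (0 < sh)%N) (g : 'I_sl) :
  (\sum_(i < sl*sh) (grp Hsh i == g : nat))%N = sh.
Proof.
transitivity (\sum_(0 <= i < sl*sh) ((i %/ sh)%N == g : nat))%N.
  by rewrite big_mkord.
have hg := ltn_ord g.
have le1 : (g * sh <= g * sh + sh)%N by rewrite leq_addr.
have le2 : (g * sh + sh <= sl * sh)%N by rewrite -mulSnr leq_mul2r hg orbT.
have z1 : (\sum_(0 <= i < g*sh) ((i %/ sh)%N == g : nat))%N = 0%N.
  rewrite big1_seq // => i /andP[_]; rewrite mem_index_iota => /andP[_ hi].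
  suff : ((i %/ sh)%N < g)%N by move=> h; rewrite ltn_eqF.
  by rewrite ltn_divLR.
have z3 : (\sum_(g*sh + sh <= i < sl*sh) ((i %/ sh)%N == g : nat))%N = 0%N.
  rewrite big1_seq // => i /andP[_]; rewrite mem_index_iota => /andP[hi _].
  suff : (g < (i %/ sh)%N)%N by move=> h; rewrite gtn_eqF.
  by rewrite leq_divRL // mulSnr.
have m : (\sum_(g*sh <= i < g*sh + sh) ((i %/ sh)%N == g : nat))%N = sh.
  rewrite (eq_big_nat _ _ (F2 := fun _ => 1%N)); last first.
    move=> i /andP[h1 h2].
    suff -> : (i %/ sh)%N = g by rewrite eqxx.
    apply/eqP; rewrite eqn_leq leq_divRL // h1 /= -ltnS ltn_divLR // mulSnr //.
  by rewrite andbT. rewrite sum_nat_const_nat. lia.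
rewrite (big_cat_nat _ (n := g * sh)) //=; last by apply: leq_trans le2.
rewrite [\sum_(g * sh <= i < sl * sh) _](big_cat_nat _ (n := g * sh + sh)) //=.
by rewrite z1 z3 m add0n addr0.
Qed.

Lemma EtE (R : nzRingType) sl sh (Hsh : (0 < sh)%N) :
  (Emx R sl Hsh)^T *m Emx R sl Hsh = (sh%:R : R)%:M.
Proof.
apply/matrixP => g h; rewrite !mxE.
under eq_bigr => i _ do rewrite !mxE.
have [<-|ne] := eqVneq g h.
  under eq_bigr => i _ do rewrite -natrM mulnb andbb.
  by rewrite -natr_sum count_grp mulr1n.
rewrite mulr0n big1 // => i _.
by have [e|] := eqVneq (grp Hsh i) g; [rewrite -e in ne; rewrite (negbTE ne) mulr0 | rewrite mul0r].
Qed.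

Lemma sum_hrg (R : nzRingType) sl sh (Hsh : (0 < sh)%N) (pl ph : R) :
  \sum_(i < sl * sh) \sum_(j < sl * sh) hrg_matrix sl sh pl ph i j =
  (sl*sh)%:R * ((sl*sh)%:R * pl + (ph - pl) * sh%:R).
Proof.
have e : forall i j : 'I_(sl*sh), hrg_matrix sl sh pl ph i j =
   pl + (ph - pl) * (grp Hsh j == grp Hsh i)%:R.
  move=> i j; rewrite mxE; case: eqP => [e|ne].
    have -> : grp Hsh j == grp Hsh i by apply/eqP/val_inj => /=.
    by rewrite mulr1 addrC subrK.
  have -> : (grp Hsh j == grp Hsh i) = false.
    by apply/negbTE/negP => /eqP/(congr1 val) /= h; apply: ne.
  by rewrite mulr0 addr0.
under eq_bigr => i _ do under eq_bigr => j _ do rewrite e.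
under eq_bigr => i _ do rewrite big_split /= -mulr_sumr -natr_sum count_grp sumr_const card_ord.
rewrite sumr_const card_ord.
by rewrite -[pl *+ _]mulr_natl -[_ *+ (sl * sh)]mulr_natl.
Qed.

Lemma CtC (R : comNzRingType) sl (pl ph : R) :
  (C0 sl pl ph)^T *m C0 sl pl ph =
  ((ph - pl)^+2)%:M + (const_mx 1 : 'M_(sl,1)) *m
     (const_mx (sl%:R * pl^+2 + 2%:R * pl * (ph - pl)) : 'M_(1,sl)).
Proof.
have e : forall b : bool, (if b then ph else pl) = pl + (ph - pl) * b%:R.
  by case; rewrite ?mulr1 ?mulr0 ?addr0 // addrC subrK.
apply/matrixP => g h; rewrite !mxE big_ord1 !mxE mul1r.
under eq_bigr => k _ do rewrite !mxE !e.
have ex : forall k : 'I_sl, (pl + (ph - pl) * (k == g)%:R) * (pl + (ph - pl) * (k == h)%:R)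
  = pl ^+ 2 + (g == k)%:R * (pl * (ph - pl)) + (h == k)%:R * (pl * (ph - pl))
    + (g == k)%:R * ((ph - pl)^+2 * (h == k)%:R).
  by move=> k; rewrite (eq_sym k g) (eq_sym k h); ring.
under eq_bigr => k _ do rewrite ex.
rewrite !big_split /= !sum_pick sumr_const card_ord.
rewrite (eq_sym h g) -[pl ^+ 2 *+ sl]mulr_natl -[_ *+ (g == h)]mulr_natl; ring.
Qed.

Lemma sylv (T : comNzRingType) n m (A : 'M[T]_(n,m)) (B : 'M[T]_(m,n)) (y : T) :
  y ^+ m * \det (y%:M - A *m B) = y ^+ n * \det (y%:M - B *m A).
Proof.
pose Q := block_mx (y%:M : 'M_n) A B (1%:M : 'M_m).
pose L := block_mx (1%:M : 'M_n) 0 (- B) (y%:M : 'M_m).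
have h1 : Q *m L = block_mx (y%:M - A *m B) (A *m y%:M) 0 y%:M.
  by rewrite mulmx_block !mulmx1 !mulmx0 !add0r !mulmxN !mul1mx subrr.
have h2 : L *m Q = block_mx y%:M A 0 (y%:M - B *m A).
  rewrite mulmx_block !mulmx1 !mul1mx !mul0mx ?add0r ?addr0 !mulNmx.
  by rewrite mul_mx_scalar mul_scalar_mx addNr addrC.
have d1 := congr1 determinant h1; have d2 := congr1 determinant h2.
rewrite !det_mulmx !det_ublock !det_scalar in d1 d2.
have dL : \det L = y ^+ m by rewrite /L det_lblock !det_scalar expr1n mul1r.
rewrite dL in d1 d2. rewrite mulrC -d1 -d2 mulrC //.
Qed.

Lemma char_mul (F : fieldType) n m (A : 'M[F]_(n,m)) (B : 'M_(m,n)) :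
  'X^m * char_poly (A *m B) = 'X^n * char_poly (B *m A).
Proof. by rewrite /char_poly /char_poly_mx !map_mxM; apply: sylv. Qed.

Lemma char_rank1 (F : fieldType) k (a : F) (u : 'M_(k.+1,1)) (v : 'M_(1,k.+1)) :
  char_poly (a%:M + u *m v) = ('X - a%:P)^+k * ('X - (a + (v *m u) 0 0)%:P).
Proof.
set y := 'X - a%:P.
have e : char_poly_mx (a%:M + u *m v) =
    y%:M - map_mx polyC u *m map_mx polyC v.
  rewrite /char_poly_mx map_mxD map_mxM map_scalar_mx opprD addrA.
  by rewrite /y raddfB.
have := sylv (map_mx polyC u) (map_mx polyC v) y.
rewrite /char_poly e expr1 det_mx11 -map_mxM !mxE eqxx mulr1n exprS -mulrA => /mulfI.
have yn0 : y != 0 by rewrite /y polyXsubC_eq0.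
move=> /(_ yn0) ->; congr (_ * _).
under eq_bigr => j _ do rewrite !mxE -polyCM.
by rewrite -(raddf_sum (@polyC F)) /y polyCD opprD addrA.
Qed.

Lemma char_hrg (F : fieldType) sl sh (Hsh : (0 < sh)%N) (Hsl : (0 < sl)%N) (pl ph : F) :
  char_poly ((hrg_matrix sl sh pl ph)^T *m hrg_matrix sl sh pl ph) =
  'X^(sl*sh - sl) * ('X - (((ph-pl) * sh%:R)^+2)%:P)^+(sl.-1)
   * ('X - ((((sl*sh)%:R * pl + (ph - pl) * sh%:R)^+2))%:P).
Proof.
rewrite hrg_fact.
set E := Emx F sl Hsh; set C := C0 sl pl ph.
have eM : (E *m C *m E^T)^T *m (E *m C *m E^T) =
   E *m (C^T *m (E^T *m E) *m C *m E^T) by rewrite !trmx_mul trmxK !mulmxA.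
have eK : (C^T *m (E^T *m E) *m C *m E^T) *m E =
   (((ph-pl) * sh%:R)^+2)%:M + (const_mx 1 : 'M_(sl,1)) *m
     (const_mx (sh%:R^+2 * (sl%:R * pl^+2 + 2%:R * pl * (ph - pl))) : 'M_(1,sl)).
  rewrite -mulmxA EtE !mul_mx_scalar -scalemxAl CtC.
  apply/matrixP => i j; rewrite !mxE !big_ord1 !mxE.
  by case: (i == j); rewrite ?mulr1n ?mulr0n; ring.
have := char_mul E (C^T *m (E^T *m E) *m C *m E^T).
rewrite -eM eK.
move: Hsl eK; case: sl E C eM => // k E C eM _ eK.
rewrite char_rank1.
rewrite mxE.
under eq_bigr => j _ do rewrite !mxE mulr1. rewrite sumr_const card_ord.
have ex : 'X^(k.+1*sh) = 'X^(k.+1) * 'X^(k.+1*sh - k.+1) :> {poly F}.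
  by rewrite -exprD subnKC // leq_pmulr.
have Xn0 : 'X^(k.+1) != 0 :> {poly F} by rewrite expf_neq0 // polyX_eq0.
rewrite ex -!mulrA => /(mulfI Xn0) -> /=.
congr (_ * (_ * ('X - _%:P))).
rewrite -mulr_natl natrM; ring.
Qed.

Lemma iter_mul (R : comNzRingType) m (a : R) : iter m ( *%R a) 1 = a ^+ m.
Proof. by elim: m => [|m IH] //=; rewrite IH exprS. Qed.

Definition Sseq (R : nzRingType) sl sh (pl ph : R) : seq R :=
  ((sl*sh)%:R * pl + (ph - pl) * sh%:R) :: nseq sl.-1 ((ph - pl) * sh%:R)
    ++ nseq (sl * sh - sl) 0.

Lemma path_ge (R : realDomainType) (a b c : R) k m :
  0 <= c -> c <= b -> b <= a ->
  path (fun x y => y <= x) a (nseq k b ++ nseq m c).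
Proof.
move=> c0 cb ba.
have hc : forall a', c <= a' -> path (fun x y : R => y <= x) a' (nseq m c).
  by elim: m => [|m IH] a' ca //=; rewrite ca IH.
elim: k a ba => [|k IH] a' ba /=; first by apply: hc; apply: le_trans ba.
by rewrite ba IH.
Qed.

Lemma sv_eq (R : rcfType) sl sh (Hsh : (0 < sh)%N) (Hsl : (0 < sl)%N) (pl ph : R) s :
  0 <= pl -> pl <= ph -> singular_values (hrg_matrix sl sh pl ph) s ->
  s = Sseq sl sh pl ph.
Proof.
move=> pl0 plph [_ s0 ssort schar].
have d0 : 0 <= ph - pl by rewrite subr_ge0.
have y0 : 0 <= (ph - pl) * sh%:R by rewrite mulr_ge0.
have xy : (ph - pl) * sh%:R <= (sl*sh)%:R * pl + (ph - pl) * sh%:R.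
  by rewrite lerDr mulr_ge0.
have S0 : all (fun x => 0 <= x) (Sseq sl sh pl ph).
  rewrite /Sseq /= all_cat !all_nseq y0 lexx !orbT andbT /=.
  by rewrite andbT; apply: le_trans y0 xy.
have Ssort : sorted (fun x y => y <= x) (Sseq sl sh pl ph).
  by rewrite /Sseq /=; apply: path_ge.
have hp : perm_eq [seq x ^+ 2 | x <- s] [seq x ^+ 2 | x <- Sseq sl sh pl ph].
  apply: prod_XsubC_eq; rewrite !big_map -schar char_hrg //.
  rewrite /Sseq big_cons big_cat /= !big_nseq !iter_mul expr0n /= subr0. by rewrite mulrC [_ ^+ sl.-1 * _]mulrC mulrA.
have sq_id : forall l : seq R, all (fun x => 0 <= x) l ->
    [seq Num.sqrt x | x <- [seq x ^+ 2 | x <- l]] = l.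
  move=> l /allP hl; rewrite -map_comp map_id_in // => x /hl hx /=.
  by rewrite sqrtr_sqr ger0_norm.
have hp2 := perm_map Num.sqrt hp.
rewrite !sq_id // in hp2.
apply: (sorted_eq (leT := fun x y : R => y <= x)) => //.
- by move=> a b c h1 h2; apply: le_trans h2 h1.
- by move=> a b /andP[h1 h2]; apply: le_anti; rewrite h1 h2.
Qed.

Lemma nth_S (R : nzRingType) sl sh (pl ph : R) (t : nat) :
  (Sseq sl sh pl ph)`_t = if t == 0%N then (sl*sh)%:R * pl + (ph - pl) * sh%:R
    else if (t.-1 < sl.-1)%N then (ph - pl) * sh%:R else 0.
Proof.
case: t => [|t] //=.
by rewrite nth_cat size_nseq; case: ifP => h; rewrite nth_nseq ?h ?if_same.
Qed.

Theorem theorem4p2 (R : rcfType) (sl sh : nat) (pl ph pl' ph' : R)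
  (s s' : seq R) :
  (0 < sl)%N -> (0 < sh)%N ->
  0 <= pl -> pl <= ph -> 0 <= pl' -> pl' <= ph' ->
  \sum_(i < sl * sh) \sum_(j < sl * sh) hrg_matrix sl sh pl ph i j = 1 ->
  \sum_(i < sl * sh) \sum_(j < sl * sh) hrg_matrix sl sh pl' ph' i j = 1 ->
  ph - pl <= ph' - pl' ->
  singular_values (hrg_matrix sl sh pl ph) s ->
  singular_values (hrg_matrix sl sh pl' ph') s' ->
  forall t : 'I_(sl * sh), s`_t <= s'`_t.
Proof.
move=> Hsl Hsh pl0 plph pl0' plph' sum1 sum1' dd sv sv' t.
rewrite (sv_eq Hsh Hsl pl0 plph sv) (sv_eq Hsh Hsl pl0' plph' sv') !nth_S.
rewrite (sum_hrg sl Hsh) in sum1; rewrite (sum_hrg sl Hsh) in sum1'.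
have nz : (sl * sh)%:R != 0 :> R by rewrite pnatr_eq0 -lt0n muln_gt0 Hsl Hsh.
have ex : (sl*sh)%:R * pl + (ph - pl) * sh%:R = (sl*sh)%:R * pl' + (ph' - pl') * sh%:R.
  by apply: (mulfI nz); rewrite sum1 sum1'.
case: ifP => _; first by rewrite ex.
case: ifP => _ //.
by rewrite ler_wpM2r.
Qed.
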